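(* Let $l>0$, $D>0$, and let $r\in C^2([0,\infty))$ satisfy $r>0$, $r'<0$ on $[0,\infty)$ and $\lim_{v\to\infty}r(v)=0$. For $j\ge0$ put $\lambda_j=(\pi j/l)^2$ and $\sigma_j=-\big[\frac{r'(1)}{1+D\lambda_j}+r(1)\big]\lambda_j$; assume there is an integer $i^c\ge1$ with $\sigma_i>0$ for $1\le i\le i^c$ and $\sigma_i\le0$ for $i>i^c$, and let $\sigma_c=\frac1D(\sqrt{-r'(1)}-\sqrt{r(1)})^2$. For $\sigma\in(0,\sigma_c)$ set $$f_0(\sigma)=-\frac{r'(1)}{Dr(1)}-\frac{\sigma}{r(1)}\ (>0),\qquad f_1=\frac{r'(1)}{Dr(1)},\qquad g_0=\frac1D,\qquad g_1=-\frac1D,$$ let $X=\{(u,v):u,v\in C^2([0,l]),\ u'=v'=0\text{ at }x=0,l\}$, let $F_\sigma$ be the inverse of $f_0(\sigma)-\frac{d^2}{dx^2}$ and $F$ the inverse of $-g_1-\frac{d^2}{dx^2}$ (both with homogeneous Neumann boundary conditions on $(0,l)$), and define the linear operator $M(\sigma)$ on $X$ by $$M(\sigma)(\tilde u,\tilde v)=\big(2f_0(\sigma)F_\sigma(\tilde u)+f_1F_\sigma(\tilde v),\ g_0F(\tilde u)\big).$$ Let $j$ be a positive integer with $\lambda_j<-\frac{r'(1)+r(1)}{Dr(1)}$ and $\sigma_j\ne\sigma_k$ for all integers $k\ne j$, and assume $\sigma_j\in(0,\sigma_c)$. Then $1$ is an eigenvalue of $M(\sigma_j)$ with algebraic multiplicity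 one.
   Context: $M(\sigma)$ is the linear part of the fixed-point reformulation $\tilde\omega=M(\sigma)\tilde\omega+H(\sigma,\tilde\omega)$ of the Neumann steady-state problem $(r(v)u)''+\sigma u(1-u)=0$, $Dv''-v+u=0$ on $(0,l)$ after shifting $(u,v)=(1+\tilde u,1+\tilde v)$. *)

(* Defs.v *)
From Stdlib Require Import Reals Lra ClassicalEpsilon.
From Coquelicot Require Import Coquelicot.
Open Scope R_scope.

Definition has_deriv_within (S : R -> Prop) (f f' : R -> R) : Prop :=
  forall x, S x ->
    filterlim (fun h => (f (x + h) - f x) / h)
      (within (fun h => h <> 0 /\ S (x + h)) (locally 0))
      (locally (f' x)).

Definition cont_within (S : R -> Prop) (f : R -> R) : Prop :=
  forall x, S x -> filterlim f (within S (locally x)) (locally (f x)).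

Definition Icc (l : R) : R -> Prop := fun x => 0 <= x <= l.
Definition Ici0 : R -> Prop := fun x => 0 <= x.

Definition C2_neumann (l : R) (u : R -> R) : Prop :=
  exists u1 u2, has_deriv_within (Icc l) u u1 /\ has_deriv_within (Icc l) u1 u2 /\
    cont_within (Icc l) u2 /\ u1 0 = 0 /\ u1 l = 0.

(* The space X = {(u,v) : u, v in C^2([0,l]), u' = v' = 0 at 0, l};
   elements are identified when they agree on [0,l]. *)
Definition inX (l : R) (p : (R -> R) * (R -> R)) : Prop :=
  C2_neumann l (fst p) /\ C2_neumann l (snd p).

Definition eqI (l : R) (f g : R -> R) : Prop := forall x, Icc l x -> f x = g x.
Definition eqX (l : R) (p q : (R -> R) * (R -> R)) : Prop :=
  eqI l (fst p) (fst q) /\ eqI l (snd p) (snd q).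

Definition is_resolvent (l a : R) (w z : R -> R) : Prop :=
  exists z1 z2, has_deriv_within (Icc l) z z1 /\ has_deriv_within (Icc l) z1 z2 /\
    cont_within (Icc l) z2 /\ z1 0 = 0 /\ z1 l = 0 /\
    (forall x, Icc l x -> a * z x - z2 x = w x).

(* (a - d^2/dx^2)^{-1} w with Neumann conditions (chosen solution). *)
Definition resolvent (l a : R) (w : R -> R) : R -> R :=
  epsilon (inhabits (fun _ : R => 0)) (fun z => is_resolvent l a w z).

Definition lam (l : R) (j : nat) : R := (PI * INR j / l) ^ 2.

(* sigma_j, with r1 = r(1), dr1 = r'(1) *)
Definition sigma_k (l D r1 dr1 : R) (j : nat) : R :=
  - (dr1 / (1 + D * lam l j) + r1) * lam l j.

Definition sigma_c (D r1 dr1 : R) : R := / D * (sqrt (- dr1) - sqrt r1) ^ 2.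

Definition f0 (D r1 dr1 sigma : R) : R := - dr1 / (D * r1) - sigma / r1.
Definition f1 (D r1 dr1 : R) : R := dr1 / (D * r1).
Definition g0 (D : R) : R := / D.
Definition g1 (D : R) : R := - / D.

Definition Mop (l D r1 dr1 sigma : R) (p : (R -> R) * (R -> R)) : (R -> R) * (R -> R) :=
  let a := f0 D r1 dr1 sigma in
  (fun x => 2 * a * resolvent l a (fst p) x + f1 D r1 dr1 * resolvent l a (snd p) x,
   fun x => g0 D * resolvent l (- g1 D) (fst p) x).

Definition MmI (l D r1 dr1 sigma : R) (p : (R -> R) * (R -> R)) : (R -> R) * (R -> R) :=
  let q := Mop l D r1 dr1 sigma p in
  (fun x => fst q x - fst p x, fun x => snd q x - snd p x).

Definition zeroX : (R -> R) * (R -> R) := (fun _ => 0, fun _ => 0).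
Definition scaleX (c : R) (p : (R -> R) * (R -> R)) : (R -> R) * (R -> R) :=
  (fun x => c * fst p x, fun x => c * snd p x).

(* 1 is an eigenvalue of M(sigma) on X with algebraic multiplicity one:
   there is an eigenvector phi, and the generalized eigenspace
   U_k ker (M - I)^k is spanned by phi. *)
Definition eigval1_alg_mult_one (l D r1 dr1 sigma : R) : Prop :=
  exists phi, inX l phi /\ ~ eqX l phi zeroX /\
    eqX l (Mop l D r1 dr1 sigma phi) phi /\
    (forall (k : nat) psi, inX l psi ->
       eqX l (Nat.iter k (MmI l D r1 dr1 sigma) psi) zeroX ->
       exists c : R, eqX l psi (scaleX c phi)).

(* Main.v *)
Require Import Defs.
From Stdlib Require Import Reals Lra Lia ZArith ClassicalEpsilon.
From Coquelicot Require Import Coquelicot.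
Open Scope R_scope.

Lemma ball_R (y e z : R) : ball y e z <-> Rabs (z - y) < e.
Proof. split; intro H; exact H. Qed.

Lemma locally_R (x : R) (P : R -> Prop) :
  locally x P <-> exists d, 0 < d /\ forall y, Rabs (y - x) < d -> P y.
Proof.
  split.
  - intros [d Hd]. exists d. split; [apply cond_pos|]. intros y Hy. apply Hd. exact Hy.
  - intros [d [Hd H]]. exists (mkposreal d Hd). intros y Hy. apply H. exact Hy.
Qed.

Lemma hdw_iff (S : R -> Prop) f f' :
  has_deriv_within S f f' <->
  forall x, S x -> forall eps, 0 < eps -> exists d, 0 < d /\
    forall h, h <> 0 -> S (x + h) -> Rabs h < d ->
      Rabs ((f (x + h) - f x) / h - f' x) < eps.
Proof.
  split.
  - intros H x Sx eps He.
    specialize (H x Sx). apply filterlim_locally with (eps := mkposreal eps He) in H.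
    unfold within in H. apply locally_R in H. destruct H as [d [Hd H]].
    exists d; split; [exact Hd|]. intros h h0 Sh hd.
    apply (H h). rewrite Rminus_0_r; exact hd. split; assumption.
  - intros H x Sx. apply filterlim_locally. intros [eps He].
    destruct (H x Sx eps He) as [d [Hd H']]. unfold within. apply locally_R.
    exists d; split; [exact Hd|]. intros h hd [h0 Sh].
    apply H'; auto. rewrite Rminus_0_r in hd; exact hd.
Qed.

Lemma hdw_of_derive (S : R -> Prop) f f' :
  (forall x, S x -> is_derive f x (f' x)) -> has_deriv_within S f f'.
Proof.
  intros H. apply hdw_iff. intros x Sx eps He.
  specialize (H x Sx). apply is_derive_Reals in H.
  destruct (H eps He) as [d Hd]. exists d. split; [apply cond_pos|].
  intros h h0 _ hd. apply Hd; assumption.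
Qed.

Lemma hdw_interior l f f' x :
  has_deriv_within (Icc l) f f' -> 0 < x < l -> is_derive f x (f' x).
Proof.
  intros H Hx. apply is_derive_Reals. intros eps He.
  rewrite hdw_iff in H. destruct (H x ltac:(unfold Icc; lra) eps He) as [d [Hd H']].
  assert (Hm : 0 < Rmin d (Rmin x (l - x))).
  { repeat apply Rmin_pos; lra. }
  exists (mkposreal _ Hm). simpl. intros h h0 hd.
  assert (h1 := Rmin_l d (Rmin x (l - x))).
  assert (h2 := Rmin_r d (Rmin x (l - x))).
  assert (h3 := Rmin_l x (l - x)). assert (h4 := Rmin_r x (l-x)).
  apply H'; auto.
  - unfold Icc. apply Rabs_lt_between in hd. lra.
  - lra.
Qed.

Lemma hdw_cont S f f' : has_deriv_within S f f' -> cont_within S f.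
Proof.
  intros H x Sx. rewrite hdw_iff in H.
  destruct (H x Sx 1 Rlt_0_1) as [d [Hd H']].
  apply filterlim_locally. intros [eps He]. unfold within. apply locally_R.
  set (K := Rabs (f' x) + 1).
  assert (HK : 0 < K) by (unfold K; pose proof (Rabs_pos (f' x)); lra).
  exists (Rmin d (eps / K)). split.
  { apply Rmin_pos; [lra| apply Rdiv_lt_0_compat; lra]. }
  intros y Hy Sy. apply ball_R. simpl.
  destruct (Req_dec y x) as [->|Hyx].
  { rewrite Rminus_eq_0, Rabs_R0. exact He. }
  set (h := y - x).
  assert (Hh : h <> 0) by (unfold h; lra).
  assert (Hyh : y = x + h) by (unfold h; ring).
  assert (Hhd : Rabs h < d) by (unfold h; pose proof (Rmin_l d (eps/K)); lra).
  assert (Hhe : Rabs h < eps / K) by (unfold h; pose proof (Rmin_r d (eps/K)); lra).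
  rewrite Hyh in Sy. specialize (H' h Hh Sy Hhd).
  rewrite Hyh.
  assert (E : f (x + h) - f x = h * ((f (x + h) - f x) / h)) by (field; exact Hh).
  rewrite E, Rabs_mult.
  assert (Rabs ((f (x + h) - f x) / h) < K).
  { unfold K. pose proof (Rabs_triang_inv ((f (x + h) - f x) / h) (f' x)). lra. }
  assert (Rabs h * K < eps).
  { apply Rmult_lt_reg_r with (/ K). apply Rinv_0_lt_compat; lra.
    rewrite Rmult_assoc, Rinv_r by lra. rewrite Rmult_1_r. exact Hhe. }
  pose proof (Rabs_pos h).
  apply Rle_lt_trans with (Rabs h * K); [|assumption].
  apply Rmult_le_compat_l; lra.
Qed.

Lemma hdw_lin S f f' g g' (a b : R) :
  has_deriv_within S f f' -> has_deriv_within S g g' ->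
  has_deriv_within S (fun x => a * f x + b * g x) (fun x => a * f' x + b * g' x).
Proof.
  intros Hf Hg x Sx.
  specialize (Hf x Sx). specialize (Hg x Sx).
  eapply filterlim_ext.
  2: { eapply filterlim_comp_2.
       - eapply filterlim_comp. exact Hf. apply (filterlim_scal_r a (f' x)).
       - eapply filterlim_comp. exact Hg. apply (filterlim_scal_r b (g' x)).
       - exact (filterlim_plus (K:=R_AbsRing) (V:=R_NormedModule) (a * f' x) (b * g' x)). }
  intros h. simpl. unfold plus, scal; simpl. unfold mult; simpl. unfold Rdiv. ring.
Qed.

Definition clamp (l x : R) := Rmax 0 (Rmin x l).

Lemma clamp_Icc l x : 0 <= l -> Icc l (clamp l x).
Proof. intros; unfold clamp, Icc, Rmax, Rmin; repeat destruct Rle_dec; lra. Qed.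

Lemma clamp_id l x : Icc l x -> clamp l x = x.
Proof. unfold clamp, Icc, Rmax, Rmin; intros; repeat destruct Rle_dec; lra. Qed.

Lemma clamp_lip l x t : 0 <= l -> Rabs (clamp l t - clamp l x) <= Rabs (t - x).
Proof.
  intros. unfold clamp, Rmax, Rmin; repeat destruct Rle_dec;
  unfold Rabs; repeat destruct Rcase_abs; lra.
Qed.

Lemma cont_clamp l f : 0 <= l -> cont_within (Icc l) f ->
  forall x, continuity_pt (fun t => f (clamp l t)) x.
Proof.
  intros hl Hf x. apply continuity_pt_filterlim.
  eapply filterlim_comp with (G := within (Icc l) (locally (clamp l x))).
  2: apply Hf, clamp_Icc, hl.
  intros P HP. unfold within in HP. apply locally_R in HP.
  destruct HP as [d [Hd HP]]. apply locally_R. exists d. split; auto.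
  intros t Ht. apply HP. pose proof (clamp_lip l x t hl). lra. apply clamp_Icc, hl.
Qed.

Lemma U_lemma l y y1 y2 k : 0 < l ->
  has_deriv_within (Icc l) y y1 -> has_deriv_within (Icc l) y1 y2 ->
  (forall x, Icc l x -> y2 x = k * y x) -> y 0 = 0 -> y1 0 = 0 ->
  forall x, Icc l x -> y x = 0 /\ y1 x = 0.
Proof.
  intros hl Hy Hy1 Hk H0 H10.
  set (C := Rabs (1 + k) + 1).
  set (h := fun x => (y x * y x + y1 x * y1 x) * exp (- C * x)).
  set (dh := fun x => (2 * y x * y1 x + 2 * y1 x * y2 x - C * (y x * y x + y1 x * y1 x)) * exp (- C * x)).
  assert (Hdh : forall x, Icc l x -> dh x <= 0).
  { intros x Hx. unfold dh. rewrite (Hk x Hx).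
    assert (0 < exp (- C * x)) by apply exp_pos.
    assert (2 * y x * y1 x + 2 * y1 x * (k * y x) - C * (y x * y x + y1 x * y1 x) <= 0).
    { unfold C. set (A := y x). set (B := y1 x).
      assert (0 <= A * A + B * B) by nra.
      unfold Rabs; destruct Rcase_abs.
      - assert (0 <= (-(1+k)) * ((A + B) * (A + B))).
        { apply Rmult_le_pos. lra. apply Rle_0_sqr. }
        nra.
      - assert (0 <= (1+k) * ((A - B) * (A - B))).
        { apply Rmult_le_pos. lra. apply Rle_0_sqr. }
        nra. }
    nra. }
  assert (Hder : forall x, 0 < x < l -> is_derive h x (dh x)).
  { intros x Hx. pose proof (hdw_interior _ _ _ _ Hy Hx) as D1.
    pose proof (hdw_interior _ _ _ _ Hy1 Hx) as D2.
    unfold h, dh.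
    eapply is_derive_ext. intro t; reflexivity.
    replace ((2 * y x * y1 x + 2 * y1 x * y2 x - C * (y x * y x + y1 x * y1 x)) * exp (- C * x))
      with ((y1 x * y x + y x * y1 x + (y2 x * y1 x + y1 x * y2 x)) * exp (- C * x) +
            (y x * y x + y1 x * y1 x) * (-C * exp (-C * x))) by ring.
    apply (is_derive_mult (fun t => y t * y t + y1 t * y1 t) (fun t => exp (-C * t))).
    - apply (is_derive_plus (fun t => y t * y t) (fun t => y1 t * y1 t)).
      + apply (is_derive_mult y y); auto. intros; apply Rmult_comm.
      + apply (is_derive_mult y1 y1); auto. intros; apply Rmult_comm.
    - auto_derive; auto. ring.
    - intros; apply Rmult_comm. }
  set (ht := fun x => h (clamp l x)).
  assert (Hcont : forall x, continuity_pt ht x).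
  { intro x. unfold ht, h.
    apply continuity_pt_mult.
    - apply continuity_pt_plus; apply continuity_pt_mult;
      apply (cont_clamp l) with (f := y) || apply (cont_clamp l) with (f := y1);
      try lra; eapply hdw_cont; eauto.
    - apply (continuity_pt_comp (fun t => - C * clamp l t) exp).
      + apply continuity_pt_mult. apply continuity_pt_const; intros ? ?; reflexivity.
        apply (cont_clamp l (fun t => t)). lra.
        intros z _ P HP. unfold filtermap, within. eapply filter_imp; [|exact HP]. auto.
      + apply derivable_continuous_pt, derivable_pt_exp. }
  assert (Hmono : forall x, Icc l x -> h x <= 0).
  { intros x Hx. destruct (Req_dec x 0) as [->|Hx0].
    { unfold h. rewrite H0, H10. lra. }
    assert (0 < x) by (unfold Icc in Hx; lra).
    destruct (MVT_gen ht 0 x dh) as [c [Hc E]].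
    - rewrite Rmin_left, Rmax_right by lra. intros t Ht.
      apply is_derive_ext_loc with h.
      + apply locally_R. exists (Rmin t (l - t)). split.
        { apply Rmin_pos; unfold Icc in Hx; lra. }
        intros s Hs. unfold ht. rewrite clamp_id; auto.
        apply Rabs_lt_between in Hs. pose proof (Rmin_l t (l-t)). pose proof (Rmin_r t (l-t)).
        unfold Icc in *; lra.
      + apply Hder. unfold Icc in Hx; lra.
    - intros t _; apply Hcont.
    - rewrite Rmin_left, Rmax_right in Hc by lra.
      unfold ht in E. rewrite !clamp_id in E; try (unfold Icc in *; lra).
      assert (h 0 = 0) by (unfold h; rewrite H0, H10; ring).
      assert (dh c <= 0) by (apply Hdh; unfold Icc in *; lra).
      nra. }
  intros x Hx. specialize (Hmono x Hx). unfold h in Hmono.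
  assert (0 < exp (- C * x)) by apply exp_pos.
  assert (y x * y x + y1 x * y1 x <= 0) by nra.
  split; nra.
Qed.

Lemma compare_lemma l y y1 y2 g g1 g2 k : 0 < l ->
  has_deriv_within (Icc l) y y1 -> has_deriv_within (Icc l) y1 y2 ->
  (forall x, is_derive g x (g1 x)) -> (forall x, is_derive g1 x (g2 x)) ->
  (forall x, Icc l x -> y2 x - g2 x = k * (y x - g x)) ->
  y 0 = g 0 -> y1 0 = g1 0 ->
  forall x, Icc l x -> y x = g x /\ y1 x = g1 x.
Proof.
  intros hl Hy Hy1 Hg Hg1 Hk H0 H1 x Hx.
  assert (D1 := hdw_lin _ _ _ _ _ 1 (-1) Hy (hdw_of_derive (Icc l) g g1 (fun x _ => Hg x))).
  assert (D2 := hdw_lin _ _ _ _ _ 1 (-1) Hy1 (hdw_of_derive (Icc l) g1 g2 (fun x _ => Hg1 x))).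
  destruct (U_lemma l _ _ _ k hl D1 D2) with (x := x) as [E1 E2]; auto.
  - intros t Ht. cbv beta. replace (1 * y t + -1 * g t) with (y t - g t) by ring.
    rewrite <- (Hk t Ht). ring.
  - rewrite H0; ring.
  - rewrite H1; ring.
  - split; lra.
Qed.

Lemma sin_jPI (j : nat) : sin (PI * INR j) = 0.
Proof. apply sin_eq_0_1. exists (Z.of_nat j). rewrite <- INR_IZR_INZ. ring. Qed.

Lemma cos_jPI (j : nat) : cos (PI * INR j) <> 0.
Proof. intro H. pose proof (sin2_cos2 (PI * INR j)). rewrite sin_jPI, H in H0.
  unfold Rsqr in H0. lra. Qed.

Lemma neumann_zero l y y1 y2 k : 0 < l ->
  has_deriv_within (Icc l) y y1 -> has_deriv_within (Icc l) y1 y2 ->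
  (forall x, Icc l x -> y2 x = k * y x) -> y1 0 = 0 -> y1 l = 0 ->
  (forall n : nat, k <> - lam l n) ->
  forall x, Icc l x -> y x = 0.
Proof.
  intros hl Hy Hy1 Hk H10 H1l Hn.
  destruct (Rtotal_order k 0) as [Hneg|[Hz|Hpos]].
  - set (w := sqrt (- k)).
    assert (Hw : 0 < w) by (apply sqrt_lt_R0; lra).
    assert (Hw2 : w * w = - k) by (apply sqrt_sqrt; lra).
    set (A := y 0).
    assert (HC := compare_lemma l y y1 y2 (fun x => A * cos (w * x))
                (fun x => - A * w * sin (w * x)) (fun x => - A * w * w * cos (w * x)) k hl Hy Hy1).
    assert (E : forall x, Icc l x -> y x = A * cos (w * x) /\ y1 x = - A * w * sin (w * x)).
    { apply HC.
      - intro x. auto_derive; auto. ring.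
      - intro x. auto_derive; auto. ring.
      - intros x Hx. rewrite Hk by auto. replace k with (- (w * w)) by lra. ring.
      - rewrite Rmult_0_r, cos_0; unfold A; ring.
      - rewrite Rmult_0_r, sin_0, H10; ring. }
    destruct (E l) as [_ El]. { unfold Icc; lra. }
    rewrite H1l in El.
    destruct (Req_dec A 0) as [HA|HA].
    { intros x Hx. destruct (E x Hx) as [Ex _]. rewrite Ex, HA. ring. }
    assert (Hs : sin (w * l) = 0).
    { apply Rmult_eq_reg_l with (- A * w). rewrite <- El. ring.
      intro Hc. apply HA. nra. }
    destruct (sin_eq_0_0 _ Hs) as [z Hz].
    exfalso.
    assert (0 < IZR z).
    { assert (0 < w * l) by (apply Rmult_lt_0_compat; lra).
      rewrite Hz in H. pose proof PI_RGT_0.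
      destruct (Rlt_or_le 0 (IZR z)); auto. nra. }
    apply lt_0_IZR in H.
    apply (Hn (Z.to_nat z)). unfold lam.
    rewrite INR_IZR_INZ, Z2Nat.id by lia.
    replace k with (- (w * w)) by lra.
    replace (PI * IZR z) with (w * l) by (rewrite Hz; ring).
    field. lra.
  - exfalso. apply (Hn 0%nat). unfold lam. simpl. rewrite Hz. field. lra.
  - set (m := sqrt k).
    assert (Hm : 0 < m) by (apply sqrt_lt_R0; lra).
    assert (Hm2 : m * m = k) by (apply sqrt_sqrt; lra).
    set (A := y 0).
    assert (HC := compare_lemma l y y1 y2 (fun x => A * (exp (m * x) + exp (- m * x)) / 2)
                (fun x => A * m * (exp (m * x) - exp (- m * x)) / 2)
                (fun x => A * m * m * (exp (m * x) + exp (- m * x)) / 2) k hl Hy Hy1).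
    assert (E : forall x, Icc l x -> y x = A * (exp (m * x) + exp (- m * x)) / 2 /\
                                    y1 x = A * m * (exp (m * x) - exp (- m * x)) / 2).
    { apply HC.
      - intro x. auto_derive; auto. field.
      - intro x. auto_derive; auto. field.
      - intros x Hx. rewrite Hk by auto. replace k with (m * m) by lra. field.
      - rewrite !Rmult_0_r, exp_0; unfold A; field.
      - rewrite !Rmult_0_r, exp_0, H10; field. }
    destruct (E l) as [_ El]. { unfold Icc; lra. }
    rewrite H1l in El.
    assert (exp (- m * l) < exp (m * l)).
    { apply exp_increasing. assert (0 < m * l) by (apply Rmult_lt_0_compat; lra). lra. }
    assert (HA : A = 0).
    { assert (A * m * (exp (m * l) - exp (- m * l)) = 0) by lra.
      apply Rmult_integral in H0. destruct H0 as [H0|H0]; [|lra].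
      apply Rmult_integral in H0. destruct H0; lra. }
    intros x Hx. destruct (E x Hx) as [Ex _]. rewrite Ex, HA. field.
Qed.

Definition om (l : R) (j : nat) := PI * INR j / l.

Lemma neumann_eig l y y1 y2 (j : nat) : 0 < l ->
  has_deriv_within (Icc l) y y1 -> has_deriv_within (Icc l) y1 y2 ->
  (forall x, Icc l x -> y2 x = - lam l j * y x) -> y1 0 = 0 ->
  forall x, Icc l x -> y x = y 0 * cos (om l j * x).
Proof.
  intros hl Hy Hy1 Hk H10.
  set (w := om l j). set (A := y 0).
  assert (Hw2 : w * w = lam l j) by (unfold w, om, lam; ring).
  assert (HC := compare_lemma l y y1 y2 (fun x => A * cos (w * x))
                (fun x => - A * w * sin (w * x)) (fun x => - A * w * w * cos (w * x)) (- lam l j) hl Hy Hy1).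
  intros x Hx. apply HC; auto.
  - intro t. auto_derive; auto. ring.
  - intro t. auto_derive; auto. ring.
  - intros t Ht. rewrite Hk by auto. rewrite <- Hw2. ring.
  - rewrite Rmult_0_r, cos_0; unfold A; ring.
  - rewrite Rmult_0_r, sin_0, H10; ring.
Qed.

Lemma resonance l y y1 y2 (j : nat) Cc : 0 < l -> (1 <= j)%nat ->
  has_deriv_within (Icc l) y y1 -> has_deriv_within (Icc l) y1 y2 ->
  (forall x, Icc l x -> y2 x = - lam l j * y x + Cc * cos (om l j * x)) -> y1 0 = 0 -> y1 l = 0 ->
  Cc = 0.
Proof.
  intros hl hj Hy Hy1 Hk H10 H1l.
  set (w := om l j). set (A := y 0).
  assert (Hj : 0 < INR j) by (apply lt_0_INR; lia).
  assert (Hw : 0 < w) by (unfold w, om; pose proof PI_RGT_0; apply Rdiv_lt_0_compat; nra).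
  assert (Hw2 : w * w = lam l j) by (unfold w, om, lam; ring).
  assert (HC := compare_lemma l y y1 y2
     (fun x => Cc * x * sin (w * x) / (2 * w) + A * cos (w * x))
     (fun x => Cc * (sin (w * x) + w * x * cos (w * x)) / (2 * w) - A * w * sin (w * x))
     (fun x => Cc * cos (w * x) - w * w * (Cc * x * sin (w * x) / (2 * w) + A * cos (w * x)))
     (- lam l j) hl Hy Hy1).
  assert (E : y1 l = Cc * (sin (w * l) + w * l * cos (w * l)) / (2 * w) - A * w * sin (w * l)).
  { apply HC.
  - intro t. auto_derive; auto. field. lra.
  - intro t. auto_derive; auto. field. lra.
  - intros t Ht. cbv beta. rewrite Hk by auto. rewrite <- Hw2. change (om l j) with w. ring.
  - cbv beta. replace (w * 0) with 0 by ring. rewrite cos_0, sin_0; unfold A; field. lra.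
  - cbv beta. replace (w * 0) with 0 by ring. rewrite cos_0, sin_0, H10; field. lra.
  - unfold Icc; lra. }
  {
    rewrite H1l in E.
    assert (Hwl : w * l = PI * INR j) by (unfold w, om; field; lra).
    rewrite Hwl, sin_jPI in E.
    assert (Cc * (PI * INR j * cos (PI * INR j)) = 0).
    { replace (w * l * cos (PI * INR j)) with (PI * INR j * cos (PI * INR j)) in E by (rewrite Hwl; ring).
      apply Rmult_eq_reg_r with (/ (2 * w)). 2: { apply Rinv_neq_0_compat; lra. }
      rewrite Rmult_0_l. rewrite E at 1. field. lra. }
    apply Rmult_integral in H. destruct H as [H|H]; auto.
    exfalso. apply Rmult_integral in H. pose proof PI_RGT_0. pose proof (cos_jPI j).
    destruct H as [H|H]; [nra|tauto].
}
Qed.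

Lemma cont_of_pt S f : (forall x, continuity_pt f x) -> cont_within S f.
Proof.
  intros H x _. eapply filterlim_filter_le_1; [apply filter_le_within|].
  apply continuity_pt_filterlim, H.
Qed.

Lemma derive_cont f f' x : is_derive f x (f' x) -> continuity_pt f x.
Proof.
  intro H. apply derivable_continuous_pt. exists (f' x). apply is_derive_Reals, H.
Qed.

Lemma is_derive_int (g : R -> R) x : (forall t, continuity_pt g t) ->
  is_derive (fun b => RInt g 0 b) x (g x).
Proof.
  intros Hg. apply (is_derive_RInt g (fun b => RInt g 0 b) 0 x).
  - apply filter_forall. intro b. apply (RInt_correct (V:=R_CompleteNormedModule)). apply (ex_RInt_continuous (V:=R_CompleteNormedModule)).
    intros z _. apply continuity_pt_filterlim, Hg.
  - apply continuity_pt_filterlim, Hg.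
Qed.

Lemma is_derive_eq (f : R -> R) (x d1 d2 : R) : is_derive f x d1 -> d1 = d2 -> is_derive f x d2.
Proof. intros H <-; exact H. Qed.

Lemma resolvent_exists l a w : 0 < l -> 0 < a -> cont_within (Icc l) w ->
  exists z, is_resolvent l a w z.
Proof.
  intros hl ha Hw.
  set (m := sqrt a).
  assert (Hm : 0 < m) by (apply sqrt_lt_R0; lra).
  assert (Hm2 : m * m = a) by (apply sqrt_sqrt; lra).
  set (wt := fun x => w (clamp l x)).
  assert (Hwt : forall x, continuity_pt wt x) by (apply cont_clamp; lra || auto).
  set (em := fun x => exp (m * x)).
  assert (Hem : forall x, 0 < em x) by (intro; apply exp_pos).
  set (fm := fun s => / em s * wt s).
  set (fp := fun s => em s * wt s).
  assert (Hcem : forall x, continuity_pt em x).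
  { intro x. apply (derive_cont _ (fun t => m * em t)). unfold em. auto_derive; auto. ring. }
  assert (Hfm : forall x, continuity_pt fm x).
  { intro x. apply continuity_pt_mult; auto. apply continuity_pt_inv; auto.
    specialize (Hem x); lra. }
  assert (Hfp : forall x, continuity_pt fp x) by (intro; apply continuity_pt_mult; auto).
  set (Jm := fun x => RInt fm 0 x).
  set (Jp := fun x => RInt fp 0 x).
  assert (Hd : em l - / em l <> 0).
  { assert (1 < em l).
    { unfold em. rewrite <- exp_0. apply exp_increasing. nra. }
    assert (/ em l < 1). { rewrite <- Rinv_1. apply Rinv_lt_contravar; lra. }
    lra. }
  set (A := (Jm l * em l + Jp l * / em l) / (2 * m) / (em l - / em l)).
  set (P := fun x => A - Jm x / (2 * m)).
  set (Q := fun x => A + Jp x / (2 * m)).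
  set (z := fun x => P x * em x + Q x * / em x).
  set (z1 := fun x => m * (P x * em x - Q x * / em x)).
  set (z2 := fun x => m * m * z x - wt x).
  assert (Dem : forall x, is_derive em x (m * em x)).
  { intro x. unfold em. auto_derive; auto. ring. }
  assert (Demi : forall x, is_derive (fun t => / em t) x (- m * / em x)).
  { intro x. unfold em. auto_derive. apply Rgt_not_eq, exp_pos. field. apply Rgt_not_eq, exp_pos. }
  assert (DP : forall x, is_derive P x (- (fm x / (2 * m)))).
  { intro x. unfold P. eapply is_derive_eq.
    - apply (is_derive_minus (fun _ => A) (fun t => Jm t / (2 * m))).
      apply is_derive_const.
      apply (is_derive_ext (fun t => / (2 * m) * Jm t)). intro t; apply Rmult_comm.
      apply is_derive_scal. apply is_derive_int, Hfm.
    - unfold minus, plus, opp, zero; simpl. field. lra. }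
  assert (DQ : forall x, is_derive Q x (fp x / (2 * m))).
  { intro x. unfold Q. eapply is_derive_eq.
    - apply (is_derive_plus (fun _ => A) (fun t => Jp t / (2 * m))).
      apply is_derive_const.
      apply (is_derive_ext (fun t => / (2 * m) * Jp t)). intro t; apply Rmult_comm.
      apply is_derive_scal. apply is_derive_int, Hfp.
    - unfold minus, plus, opp, zero; simpl. field. lra. }
  assert (Dz : forall x, is_derive z x (z1 x)).
  { intro x. unfold z. eapply is_derive_eq.
    - apply (is_derive_plus (fun t => P t * em t) (fun t => Q t * / em t)).
      + apply (is_derive_mult P em); auto. intros; apply Rmult_comm.
      + apply (is_derive_mult Q (fun t => / em t)); auto. intros; apply Rmult_comm.
    - unfold z1, fp, fm. specialize (Hem x). unfold plus, mult; simpl. field. lra. }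
  assert (Dz1 : forall x, is_derive z1 x (z2 x)).
  { intro x. unfold z1. eapply is_derive_eq.
    - apply is_derive_scal.
      apply (is_derive_minus (fun t => P t * em t) (fun t => Q t * / em t)).
      + apply (is_derive_mult P em); auto. intros; apply Rmult_comm.
      + apply (is_derive_mult Q (fun t => / em t)); auto. intros; apply Rmult_comm.
    - unfold z2, z, fp, fm. specialize (Hem x). unfold minus, plus, opp, mult; simpl. field. lra. }
  exists z, z1, z2. split; [|split; [|split; [|split; [|split]]]].
  - apply hdw_of_derive. intros; apply Dz.
  - apply hdw_of_derive. intros; apply Dz1.
  - apply cont_of_pt. intro x. unfold z2. apply continuity_pt_minus; auto.
    apply continuity_pt_mult. apply continuity_pt_const. intros ? ?; reflexivity.
    apply (derive_cont _ z1), Dz.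
  - unfold z1, P, Q, Jm, Jp. rewrite !RInt_point. unfold zero; simpl. unfold em. rewrite Rmult_0_r, exp_0. field. lra.
  - unfold z1, P, Q. fold (Jm l) (Jp l). unfold A. assert (1 < em l) by (unfold em; rewrite <- exp_0; apply exp_increasing; nra). field. repeat split; nra.
  - intros x Hx. unfold z2, wt. rewrite clamp_id by auto. rewrite Hm2. ring.
Qed.


Lemma resolvent_spec l a w : 0 < l -> 0 < a -> cont_within (Icc l) w ->
  is_resolvent l a w (resolvent l a w).
Proof.
  intros hl ha hw. unfold resolvent. apply epsilon_spec.
  destruct (resolvent_exists l a w hl ha hw) as [z Hz]. exists z; exact Hz.
Qed.

Lemma lam_nonneg l n : 0 <= lam l n.
Proof. unfold lam. apply pow2_ge_0. Qed.

Lemma resolvent_unique l a w z z' : 0 < l -> 0 < a ->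
  is_resolvent l a w z -> is_resolvent l a w z' -> eqI l z z'.
Proof.
  intros hl ha [z1 [z2 [D1 [D2 [_ [H0 [Hl He]]]]]]] [z1' [z2' [D1' [D2' [_ [H0' [Hl' He']]]]]]].
  assert (Dd := hdw_lin _ _ _ _ _ 1 (-1) D1 D1').
  assert (Dd2 := hdw_lin _ _ _ _ _ 1 (-1) D2 D2').
  intros x Hx.
  assert (E := neumann_zero l _ _ _ a hl Dd Dd2).
  enough (1 * z x + -1 * z' x = 0) by lra.
  apply E; auto.
  - intros t Ht. specialize (He t Ht). specialize (He' t Ht). nra.
  - rewrite H0, H0'; ring.
  - rewrite Hl, Hl'; ring.
  - intros n Hn. pose proof (lam_nonneg l n). lra.
Qed.

Lemma hdw_ext S f f' g g' : (forall x, f x = g x) -> (forall x, f' x = g' x) ->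
  has_deriv_within S f f' -> has_deriv_within S g g'.
Proof.
  intros E E' H x Sx. specialize (H x Sx). rewrite <- E'.
  eapply filterlim_ext; [|exact H]. intro h. simpl. rewrite !E. reflexivity.
Qed.

Lemma cos_hdw l w : has_deriv_within (Icc l) (fun x => cos (w * x)) (fun x => - w * sin (w * x)).
Proof. apply hdw_of_derive. intros x _. auto_derive; auto. ring. Qed.

Lemma sin_hdw l w : has_deriv_within (Icc l) (fun x => - w * sin (w * x)) (fun x => - (w * w) * cos (w * x)).
Proof. apply hdw_of_derive. intros x _. auto_derive; auto. ring. Qed.

Lemma cos_cont l w : cont_within (Icc l) (fun x => - (w * w) * cos (w * x)).
Proof. apply cont_of_pt. intro x. apply (derive_cont _ (fun x => (w * w) * w * sin (w * x))).
  auto_derive; auto. ring. Qed.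

Lemma om_l_sin l j : 0 < l -> sin (om l j * l) = 0.
Proof. intros. unfold om. replace (PI * INR j / l * l) with (PI * INR j) by (field; lra).
  apply sin_jPI. Qed.

Lemma cos_resolvent l a (j : nat) : 0 < l -> 0 < a ->
  is_resolvent l a (fun x => cos (om l j * x)) (fun x => / (a + lam l j) * cos (om l j * x)).
Proof.
  intros hl ha. pose proof (lam_nonneg l j).
  exists (fun x => / (a + lam l j) * (- om l j * sin (om l j * x))),
         (fun x => / (a + lam l j) * (- (om l j * om l j) * cos (om l j * x))).
  split; [|split; [|split; [|split; [|split]]]].
  - apply hdw_of_derive. intros x _. auto_derive; auto. ring.
  - apply hdw_of_derive. intros x _. auto_derive; auto. ring.
  - apply cont_of_pt. intro x. apply (derive_cont _ (fun x => / (a + lam l j) * ((om l j * om l j) * om l j * sin (om l j * x)))).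
    auto_derive; auto. ring.
  - rewrite Rmult_0_r, sin_0. ring.
  - rewrite om_l_sin by auto. ring.
  - intros x _. assert (om l j * om l j = lam l j) by (unfold om, lam; ring).
    rewrite H0. field. lra.
Qed.

Lemma C2_cont l u : C2_neumann l u -> cont_within (Icc l) u.
Proof. intros [u1 [u2 [D1 _]]]. eapply hdw_cont; eauto. Qed.

Definition phiX (l D : R) (j : nat) : (R -> R) * (R -> R) :=
  (fun x => cos (om l j * x), fun x => / (1 + D * lam l j) * cos (om l j * x)).

Lemma G_lemma l D r1 dr1 (j : nat) (psi : (R -> R) * (R -> R)) c :
  0 < l -> 0 < D -> 0 < r1 -> dr1 <> 0 -> (1 <= j)%nat ->
  0 < f0 D r1 dr1 (sigma_k l D r1 dr1 j) ->
  / D - f0 D r1 dr1 (sigma_k l D r1 dr1 j) + 2 * lam l j <> 0 ->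
  (forall n, / D - f0 D r1 dr1 (sigma_k l D r1 dr1 j) + lam l j <> - lam l n) ->
  inX l psi ->
  eqX l (MmI l D r1 dr1 (sigma_k l D r1 dr1 j) psi) (scaleX c (phiX l D j)) ->
  c = 0 /\ exists c', eqX l psi (scaleX c' (phiX l D j)).
Proof.
  intros hl hD hr hdr hj ha HF3 HF4 [Hu Hv] [H1 H2].
  destruct psi as [u v]. simpl in Hu, Hv.
  unfold MmI, Mop, scaleX, phiX in H1, H2. simpl in H1, H2.
  set (sg := sigma_k l D r1 dr1 j) in *.
  set (a := f0 D r1 dr1 sg) in *.
  set (lm := lam l j) in *.
  set (w := om l j) in *.
  set (ff1 := f1 D r1 dr1) in *.
  assert (Hlm : 0 < lm).
  { unfold lm, lam. assert (0 < INR j) by (apply lt_0_INR; lia).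
    pose proof PI_RGT_0. apply pow_lt. apply Rdiv_lt_0_compat; nra. }
  assert (Hw2 : w * w = lm) by (unfold w, lm, om, lam; ring).
  assert (Hb : 0 < - g1 D) by (unfold g1; rewrite Ropp_involutive; apply Rinv_0_lt_compat; lra).
  assert (Hcu := C2_cont _ _ Hu). assert (Hcv := C2_cont _ _ Hv).
  destruct (resolvent_spec l a u hl ha Hcu) as [zu1 [zu2 [Du1 [Du2 [_ [Hu0 [Hul Eu]]]]]]].
  destruct (resolvent_spec l a v hl ha Hcv) as [zv1 [zv2 [Dv1 [Dv2 [_ [Hv0 [Hvl Ev]]]]]]].
  destruct (resolvent_spec l (- g1 D) u hl Hb Hcu) as [zb1 [zb2 [Db1 [Db2 [_ [Hb0 [Hbl Eb]]]]]]].
  set (Ru := resolvent l a u) in *.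
  set (Rv := resolvent l a v) in *.
  set (Rb := resolvent l (- g1 D) u) in *.
  set (bt := / (1 + D * lm)) in *.
  assert (HDl : 1 + D * lm <> 0) by nra.
  assert (Hff1 : ff1 <> 0).
  { unfold ff1, f1. intro Hc. apply hdr. apply Rmult_eq_reg_r with (/ (D * r1)).
    rewrite Rmult_0_l; exact Hc. apply Rinv_neq_0_compat. nra. }
  assert (FA : a - lm + ff1 * bt = 0).
  { unfold a, sg, ff1, bt, f0, f1, sigma_k. fold lm. field. repeat split; lra. }
  pose (U := fun x => 2 * a * Ru x + ff1 * Rv x + (- c) * cos (w * x)).
  pose (U1 := fun x => 2 * a * zu1 x + ff1 * zv1 x + (- c) * (- w * sin (w * x))).
  pose (U2 := fun x => 2 * a * zu2 x + ff1 * zv2 x + (- c) * (- (w * w) * cos (w * x))).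
  pose (V := fun x => g0 D * Rb x + (- c * bt) * cos (w * x)).
  pose (V1 := fun x => g0 D * zb1 x + (- c * bt) * (- w * sin (w * x))).
  pose (V2 := fun x => g0 D * zb2 x + (- c * bt) * (- (w * w) * cos (w * x))).
  assert (DU1 : has_deriv_within (Icc l) U U1).
  { assert (T := hdw_lin _ _ _ _ _ 1 (- c) (hdw_lin _ _ _ _ _ (2 * a) ff1 Du1 Dv1) (cos_hdw l w)).
    eapply hdw_ext; [| |exact T]; intro x; unfold U, U1; simpl; ring. }
  assert (DU2 : has_deriv_within (Icc l) U1 U2).
  { assert (T := hdw_lin _ _ _ _ _ 1 (- c) (hdw_lin _ _ _ _ _ (2 * a) ff1 Du2 Dv2) (sin_hdw l w)).
    eapply hdw_ext; [| |exact T]; intro x; unfold U1, U2; simpl; ring. }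
  assert (DV1 : has_deriv_within (Icc l) V V1).
  { assert (T := hdw_lin _ _ _ _ _ (g0 D) (- c * bt) Db1 (cos_hdw l w)).
    eapply hdw_ext; [| |exact T]; intro x; unfold V, V1; simpl; ring. }
  assert (DV2 : has_deriv_within (Icc l) V1 V2).
  { assert (T := hdw_lin _ _ _ _ _ (g0 D) (- c * bt) Db2 (sin_hdw l w)).
    eapply hdw_ext; [| |exact T]; intro x; unfold V1, V2; simpl; ring. }
  assert (EU : forall x, Icc l x -> u x = U x).
  { intros x Hx. specialize (H1 x Hx). unfold U. lra. }
  assert (EV : forall x, Icc l x -> v x = V x).
  { intros x Hx. specialize (H2 x Hx). unfold V. lra. }
  assert (U10 : U1 0 = 0) by (unfold U1; replace (w * 0) with 0 by ring; rewrite Hu0, Hv0, sin_0; ring).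
  assert (U1l : U1 l = 0) by (unfold U1, w; rewrite Hul, Hvl, om_l_sin by lra; ring).
  assert (V10 : V1 0 = 0) by (unfold V1; replace (w * 0) with 0 by ring; rewrite Hb0, sin_0; ring).
  assert (V1l : V1 l = 0) by (unfold V1, w; rewrite Hbl, om_l_sin by lra; ring).
  set (b := / D).
  (* the component along the eigenvalue -lm *)
  pose (Y := fun x => (b + lm) * U x + ff1 * V x).
  pose (Y1 := fun x => (b + lm) * U1 x + ff1 * V1 x).
  pose (Y2 := fun x => (b + lm) * U2 x + ff1 * V2 x).
  assert (DY1 : has_deriv_within (Icc l) Y Y1) by (apply hdw_lin; auto).
  assert (DY2 : has_deriv_within (Icc l) Y1 Y2) by (apply hdw_lin; auto).
  assert (Hc0 : c = 0).
  { assert (R := resonance l Y Y1 Y2 j (c * (2 * lm * (b + lm))) hl hj DY1 DY2).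
    assert (c * (2 * lm * (b + lm)) = 0).
    { apply R.
      - intros x Hx. fold lm w.
        specialize (Eu x Hx). specialize (Ev x Hx). specialize (Eb x Hx).
        specialize (EU x Hx). specialize (EV x Hx).
        unfold Y, Y2, U2, V2.
        replace (zu2 x) with (a * Ru x - u x) by lra.
        replace (zv2 x) with (a * Rv x - v x) by lra.
        replace (zb2 x) with (- g1 D * Rb x - u x) by lra.
        rewrite EU, EV. unfold Y, U, V. rewrite Hw2.
        unfold b, a, sg, ff1, bt, f0, f1, g0, g1, sigma_k. fold lm. field. repeat split; lra.
      - unfold Y1. rewrite U10, V10. ring.
      - unfold Y1. rewrite U1l, V1l. ring. }
    assert (0 < b) by (unfold b; apply Rinv_0_lt_compat; lra).
    apply Rmult_integral in H. destruct H; auto. exfalso.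
    assert (0 < 2 * lm * (b + lm)) by (apply Rmult_lt_0_compat; lra). lra. }
  subst c. split; [reflexivity|].
  pose (Z := fun x => (a - lm) * U x + ff1 * V x).
  pose (Z1 := fun x => (a - lm) * U1 x + ff1 * V1 x).
  pose (Z2 := fun x => (a - lm) * U2 x + ff1 * V2 x).
  assert (DZ1 : has_deriv_within (Icc l) Z Z1) by (apply hdw_lin; auto).
  assert (DZ2 : has_deriv_within (Icc l) Z1 Z2) by (apply hdw_lin; auto).
  assert (HZ : forall x, Icc l x -> Z x = 0).
  { apply (neumann_zero l Z Z1 Z2 (b - a + lm) hl DZ1 DZ2).
    - intros x Hx.
      specialize (Eu x Hx). specialize (Ev x Hx). specialize (Eb x Hx).
      specialize (EU x Hx). specialize (EV x Hx).
      unfold Z, Z2, U2, V2.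
      replace (zu2 x) with (a * Ru x - u x) by lra.
      replace (zv2 x) with (a * Rv x - v x) by lra.
      replace (zb2 x) with (- g1 D * Rb x - u x) by lra.
      rewrite EU, EV. unfold Z, U, V. rewrite Hw2.
      unfold b, a, sg, ff1, bt, f0, f1, g0, g1, sigma_k. fold lm. field. repeat split; lra.
    - unfold Z1. rewrite U10, V10. ring.
    - unfold Z1. rewrite U1l, V1l. ring.
    - exact HF4. }
  assert (HY : forall x, Icc l x -> Y x = Y 0 * cos (w * x)).
  { apply (neumann_eig l Y Y1 Y2 j hl DY1 DY2).
    - intros x Hx. fold lm.
      specialize (Eu x Hx). specialize (Ev x Hx). specialize (Eb x Hx).
      specialize (EU x Hx). specialize (EV x Hx).
      unfold Y, Y2, U2, V2.
      replace (zu2 x) with (a * Ru x - u x) by lra.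
      replace (zv2 x) with (a * Rv x - v x) by lra.
      replace (zb2 x) with (- g1 D * Rb x - u x) by lra.
      rewrite EU, EV. unfold Y, U, V. rewrite Hw2.
      unfold b, a, sg, ff1, bt, f0, f1, g0, g1, sigma_k. fold lm. field. repeat split; lra.
    - unfold Y1. rewrite U10, V10. ring. }
  exists (Y 0 / (b - a + 2 * lm)).
  assert (HUx : forall x, Icc l x -> U x = Y 0 / (b - a + 2 * lm) * cos (w * x)).
  { intros x Hx. specialize (HZ x Hx). specialize (HY x Hx). unfold Z in HZ.
    unfold Y in HY at 1.
    apply Rmult_eq_reg_l with (b - a + 2 * lm); [|exact HF3].
    replace ((b - a + 2 * lm) * U x) with ((b + lm) * U x + ff1 * V x - ((a - lm) * U x + ff1 * V x)) by ring.
    rewrite HZ, HY. field. exact HF3. }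
  split; simpl; intros x Hx.
  - rewrite EU by auto. apply HUx, Hx.
  - rewrite EV by auto.
    specialize (HZ x Hx). unfold Z in HZ.
    apply Rmult_eq_reg_l with ff1; [|exact Hff1].
    replace (ff1 * V x) with (- (a - lm) * U x) by lra.
    rewrite HUx by auto.
    replace (- (a - lm)) with (ff1 * bt) by lra. fold lm w bt. ring.
Qed.

Lemma cont_lin S f g (a b : R) : cont_within S f -> cont_within S g ->
  cont_within S (fun x => a * f x + b * g x).
Proof.
  intros Hf Hg x Sx. specialize (Hf x Sx). specialize (Hg x Sx).
  eapply filterlim_comp_2.
  - eapply filterlim_comp. exact Hf. apply (filterlim_scal_r a (f x)).
  - eapply filterlim_comp. exact Hg. apply (filterlim_scal_r b (g x)).
  - exact (filterlim_plus (K:=R_AbsRing) (V:=R_NormedModule) (a * f x) (b * g x)).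
Qed.

Lemma cont_ext S f g : (forall x, f x = g x) -> cont_within S f -> cont_within S g.
Proof.
  intros E H x Sx. specialize (H x Sx). rewrite <- E.
  eapply filterlim_ext; [|exact H]. exact E.
Qed.

Lemma C2_lin3 l f g h (a b c : R) : C2_neumann l f -> C2_neumann l g -> C2_neumann l h ->
  C2_neumann l (fun x => a * f x + b * g x + c * h x).
Proof.
  intros [f1 [f2 [Df1 [Df2 [Cf [F0 Fl]]]]]] [g1 [g2 [Dg1 [Dg2 [Cg [G0 Gl]]]]]]
         [h1 [h2 [Dh1 [Dh2 [Ch [H0 Hl]]]]]].
  exists (fun x => a * f1 x + b * g1 x + c * h1 x), (fun x => a * f2 x + b * g2 x + c * h2 x).
  split; [|split; [|split; [|split]]].
  - eapply hdw_ext; [| |exact (hdw_lin _ _ _ _ _ 1 c (hdw_lin _ _ _ _ _ a b Df1 Dg1) Dh1)];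
    intro x; simpl; ring.
  - eapply hdw_ext; [| |exact (hdw_lin _ _ _ _ _ 1 c (hdw_lin _ _ _ _ _ a b Df2 Dg2) Dh2)];
    intro x; simpl; ring.
  - eapply cont_ext; [|exact (cont_lin _ _ _ 1 c (cont_lin _ _ _ a b Cf Cg) Ch)].
    intro x; simpl; ring.
  - rewrite F0, G0, H0; ring.
  - rewrite Fl, Gl, Hl; ring.
Qed.

Lemma res_C2 l a w : 0 < l -> 0 < a -> cont_within (Icc l) w -> C2_neumann l (resolvent l a w).
Proof.
  intros hl ha hw. destruct (resolvent_spec l a w hl ha hw) as [z1 [z2 [D1 [D2 [C [H0 [Hl _]]]]]]].
  exists z1, z2. auto.
Qed.

Lemma C2_ext l f g : (forall x, f x = g x) -> C2_neumann l f -> C2_neumann l g.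
Proof.
  intros E [f1 [f2 [D1 [D2 [C [H0 Hl]]]]]]. exists f1, f2. repeat split; auto.
  eapply hdw_ext; [exact E| |exact D1]; reflexivity.
Qed.

Lemma MmI_inX l D r1 dr1 s psi : 0 < l -> 0 < D -> 0 < f0 D r1 dr1 s ->
  inX l psi -> inX l (MmI l D r1 dr1 s psi).
Proof.
  intros hl hD ha [Hu Hv]. destruct psi as [u v]. simpl in *.
  assert (Hb : 0 < - g1 D) by (unfold g1; rewrite Ropp_involutive; apply Rinv_0_lt_compat; lra).
  assert (Cu := C2_cont _ _ Hu). assert (Cv := C2_cont _ _ Hv).
  split; simpl.
  - apply (C2_ext l (fun x => 2 * f0 D r1 dr1 s * resolvent l (f0 D r1 dr1 s) u x +
       f1 D r1 dr1 * resolvent l (f0 D r1 dr1 s) v x + (-1) * u x)).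
    { intro; ring. }
    apply C2_lin3; auto; apply res_C2; auto.
  - apply (C2_ext l (fun x => g0 D * resolvent l (- g1 D) u x + 0 * u x + (-1) * v x)).
    { intro; ring. }
    apply C2_lin3; auto; apply res_C2; auto.
Qed.

Lemma cos_resolvent_k l a (j : nat) k : 0 < l -> 0 < a ->
  is_resolvent l a (fun x => k * cos (om l j * x)) (fun x => k / (a + lam l j) * cos (om l j * x)).
Proof.
  intros hl ha. pose proof (lam_nonneg l j).
  exists (fun x => k / (a + lam l j) * (- om l j * sin (om l j * x))),
         (fun x => k / (a + lam l j) * (- (om l j * om l j) * cos (om l j * x))).
  split; [|split; [|split; [|split; [|split]]]].
  - apply hdw_of_derive. intros x _. auto_derive; auto. ring.
  - apply hdw_of_derive. intros x _. auto_derive; auto. ring.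
  - apply cont_of_pt. intro x. apply (derive_cont _ (fun x => k / (a + lam l j) * ((om l j * om l j) * om l j * sin (om l j * x)))).
    auto_derive; auto. ring.
  - rewrite Rmult_0_r, sin_0. ring.
  - rewrite om_l_sin by auto. ring.
  - intros x _. assert (om l j * om l j = lam l j) by (unfold om, lam; ring).
    rewrite H0. field. lra.
Qed.

Lemma C2_cos l (j : nat) k : 0 < l -> C2_neumann l (fun x => k * cos (om l j * x)).
Proof.
  intros hl. exists (fun x => k * (- om l j * sin (om l j * x))),
         (fun x => k * (- (om l j * om l j) * cos (om l j * x))).
  split; [|split; [|split; [|split]]].
  - apply hdw_of_derive. intros x _. auto_derive; auto. ring.
  - apply hdw_of_derive. intros x _. auto_derive; auto. ring.
  - apply cont_of_pt. intro x. apply (derive_cont _ (fun x => k * ((om l j * om l j) * om l j * sin (om l j * x)))).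
    auto_derive; auto. ring.
  - rewrite Rmult_0_r, sin_0. ring.
  - rewrite om_l_sin by auto. ring.
Qed.

Theorem lemma2p2 (l D : R) (r dr : R -> R) (j : nat) :
  0 < l -> 0 < D ->
  (* r in C^2([0,oo)), dr = r' *)
  has_deriv_within Ici0 r dr ->
  (exists ddr, has_deriv_within Ici0 dr ddr /\ cont_within Ici0 ddr) ->
  (forall v, 0 <= v -> 0 < r v) ->
  (forall v, 0 <= v -> dr v < 0) ->
  is_lim r p_infty 0 ->
  (exists ic : nat, (1 <= ic)%nat /\
     (forall i : nat, (1 <= i <= ic)%nat -> 0 < sigma_k l D (r 1) (dr 1) i) /\
     (forall i : nat, (ic < i)%nat -> sigma_k l D (r 1) (dr 1) i <= 0)) ->
  (1 <= j)%nat ->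
  lam l j < - (dr 1 + r 1) / (D * r 1) ->
  (forall k : nat, k <> j -> sigma_k l D (r 1) (dr 1) j <> sigma_k l D (r 1) (dr 1) k) ->
  0 < sigma_k l D (r 1) (dr 1) j < sigma_c D (r 1) (dr 1) ->
  eigval1_alg_mult_one l D (r 1) (dr 1) (sigma_k l D (r 1) (dr 1) j).
Proof.
  intros hl hD _ _ Hpos Hneg _ _ hj _ Hdist [Hs0 Hsc].
  assert (hr : 0 < r 1) by (apply Hpos; lra).
  assert (hdr : dr 1 < 0) by (apply Hneg; lra).
  assert (Hlm : 0 < lam l j).
  { unfold lam. assert (0 < INR j) by (apply lt_0_INR; lia).
    pose proof PI_RGT_0. apply pow_lt. apply Rdiv_lt_0_compat; nra. }
  assert (Ht : 0 < 1 + D * lam l j) by nra.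
  assert (ha : 0 < f0 D (r 1) (dr 1) (sigma_k l D (r 1) (dr 1) j)).
  { assert (E : f0 D (r 1) (dr 1) (sigma_k l D (r 1) (dr 1) j) =
                (- dr 1 / (D * (1 + D * lam l j)) + r 1 * lam l j) / r 1).
    { unfold f0, sigma_k. field. repeat split; lra. }
    rewrite E. apply Rdiv_lt_0_compat; [|lra].
    assert (0 < - dr 1 / (D * (1 + D * lam l j))).
    { apply Rdiv_lt_0_compat; nra. }
    nra. }
  assert (HF3 : / D - f0 D (r 1) (dr 1) (sigma_k l D (r 1) (dr 1) j) + 2 * lam l j <> 0).
  { intro E.
    assert (E2 : (/ D - f0 D (r 1) (dr 1) (sigma_k l D (r 1) (dr 1) j) + 2 * lam l j)
                 * (D * r 1 * (1 + D * lam l j)) = r 1 * (1 + D * lam l j) ^ 2 + dr 1).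
    { unfold f0, sigma_k. field. repeat split; lra. }
    rewrite E, Rmult_0_l in E2.
    assert (Key : dr 1 = - (r 1 * (1 + D * lam l j) ^ 2)) by lra.
    assert (Hsq : sqrt (- dr 1) = sqrt (r 1) * (1 + D * lam l j)).
    { rewrite Key, Ropp_involutive, sqrt_mult by (lra || apply pow2_ge_0).
      rewrite sqrt_pow2 by lra. reflexivity. }
    assert (Hc : sigma_c D (r 1) (dr 1) = r 1 * (D * lam l j) ^ 2 / D).
    { unfold sigma_c. rewrite Hsq.
      replace ((sqrt (r 1) * (1 + D * lam l j) - sqrt (r 1)) ^ 2)
        with ((sqrt (r 1) * sqrt (r 1)) * (D * lam l j) ^ 2) by ring.
      rewrite sqrt_sqrt by lra. field. lra. }
    assert (Hs : sigma_k l D (r 1) (dr 1) j = r 1 * (D * lam l j) ^ 2 / D).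
    { unfold sigma_k. rewrite Key. field. split; lra. }
    lra. }
  assert (HF4 : forall n, / D - f0 D (r 1) (dr 1) (sigma_k l D (r 1) (dr 1) j) + lam l j <> - lam l n).
  { intros n E. destruct (Nat.eq_dec n j) as [->|Hnj].
    { apply HF3. lra. }
    apply (Hdist n Hnj).
    pose proof (lam_nonneg l n).
    assert (E2 : (/ D - f0 D (r 1) (dr 1) (sigma_k l D (r 1) (dr 1) j) + lam l j + lam l n)
                 * (D * r 1 * (1 + D * lam l j)) = r 1 * (1 + D * lam l j) * (1 + D * lam l n) + dr 1).
    { unfold f0, sigma_k. field. repeat split; lra. }
    replace (/ D - f0 D (r 1) (dr 1) (sigma_k l D (r 1) (dr 1) j) + lam l j + lam l n) with 0 in E2 by lra.
    rewrite Rmult_0_l in E2.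
    assert (Key : dr 1 = - (r 1 * (1 + D * lam l j) * (1 + D * lam l n))) by lra.
    unfold sigma_k. rewrite Key. field. split; nra. }
  set (phi := phiX l D j).
  assert (Hphi : inX l phi).
  { split; simpl.
    - apply (C2_ext l (fun x => 1 * cos (om l j * x))). intro; ring. apply C2_cos, hl.
    - apply C2_cos, hl. }
  assert (IND : forall k psi, inX l psi ->
    eqX l (Nat.iter k (MmI l D (r 1) (dr 1) (sigma_k l D (r 1) (dr 1) j)) psi) zeroX ->
    exists c : R, eqX l psi (scaleX c phi)).
  { induction k; intros psi Hpsi Hit.
    - exists 0. destruct Hit as [E1 E2]. simpl in E1, E2.
      split; intros x Hx; simpl; [rewrite E1 by auto|rewrite E2 by auto]; ring.
    - rewrite Nat.iter_succ_r in Hit.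
      apply IHk in Hit; [|apply MmI_inX; auto].
      destruct Hit as [c Hc].
      destruct (G_lemma l D (r 1) (dr 1) j psi c hl hD hr ltac:(lra) hj ha HF3 HF4 Hpsi Hc) as [_ H'].
      exact H'. }
  exists phi. split; [exact Hphi|]. split; [|split; [|exact IND]].
  - intros [E _]. specialize (E 0 ltac:(unfold Icc; lra)). simpl in E.
    rewrite Rmult_0_r, cos_0 in E. lra.
  - set (a := f0 D (r 1) (dr 1) (sigma_k l D (r 1) (dr 1) j)) in *.
    assert (Hb : 0 < - g1 D) by (unfold g1; rewrite Ropp_involutive; apply Rinv_0_lt_compat; lra).
    assert (C1 : cont_within (Icc l) (fun x => cos (om l j * x))) by (apply (C2_cont l), Hphi).
    assert (C2 : cont_within (Icc l) (fun x => / (1 + D * lam l j) * cos (om l j * x))) by (apply (C2_cont l), Hphi).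
    assert (R1 := resolvent_unique l a _ _ _ hl ha (resolvent_spec l a _ hl ha C1) (cos_resolvent l a j hl ha)).
    assert (R2 := resolvent_unique l a _ _ _ hl ha (resolvent_spec l a _ hl ha C2) (cos_resolvent_k l a j (/ (1 + D * lam l j)) hl ha)).
    assert (R3 := resolvent_unique l _ _ _ _ hl Hb (resolvent_spec l _ _ hl Hb C1) (cos_resolvent l (- g1 D) j hl Hb)).
    unfold Mop, phi, phiX. simpl. split; intros x Hx; simpl.
    + fold a. rewrite (R1 x Hx), (R2 x Hx).
      assert (FA : a - lam l j + f1 D (r 1) (dr 1) * / (1 + D * lam l j) = 0).
      { unfold a, f0, f1, sigma_k. field. repeat split; lra. }
      pose proof (lam_nonneg l j).
      replace (f1 D (r 1) (dr 1)) with ((lam l j - a) * (1 + D * lam l j)).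
      2: { apply Rmult_eq_reg_r with (/ (1 + D * lam l j)). rewrite Rmult_assoc, Rinv_r by lra. lra.
           apply Rinv_neq_0_compat; lra. }
      field. lra.
    + rewrite (R3 x Hx). unfold g0, g1. field. split; lra.
Qed.
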